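(* Let $D$ be a squarefree integer and let $K$ be one of $\mathbb{R},\mathbb{Q}_2,\mathbb{Q}_3,\mathbb{Q}_5$. Then $C_D(K)\neq\emptyset$ if and only if $D$ is a square in $K$; explicitly, this means $D>0$, $D\equiv1\pmod 8$, $D\equiv 1\pmod 3$, $D\equiv\pm1\pmod 5$ for $K=\mathbb{R},\mathbb{Q}_2,\mathbb{Q}_3,\mathbb{Q}_5$ respectively.
   Context: $C_D\subset\mathbb{P}^4$ is the curve over $\mathbb{Q}$ given by $X_0^2-2X_1^2+X_2^2=0$, $X_1^2-2X_2^2+DX_3^2=0$, $X_2^2-2DX_3^2+X_4^2=0$. *)

(* Defs.v *)
From mathcomp Require Import all_boot all_order all_algebra.
From mathcomp Require Import reals.
Set Implicit Arguments. Unset Strict Implicit. Unset Printing Implicit Defensive.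
Import Order.TTheory GRing.Theory Num.Theory.
Local Open Scope ring_scope.

Definition squarefree (D : int) : Prop :=
  D != 0 /\ forall p : nat, prime p -> ~~ (p ^ 2 %| `|D|)%N.

Definition CD_eqs {T : comPzRingType} (D : T) (x0 x1 x2 x3 x4 : T) : Prop :=
  [/\ x0 ^+ 2 - 2 * x1 ^+ 2 + x2 ^+ 2 = 0,
      x1 ^+ 2 - 2 * x2 ^+ 2 + D * x3 ^+ 2 = 0 &
      x2 ^+ 2 - 2 * D * x3 ^+ 2 + x4 ^+ 2 = 0].

Definition CD_real_point (R : realType) (D : int) : Prop :=
  exists x0 x1 x2 x3 x4 : R,
    ~ [/\ x0 = 0, x1 = 0, x2 = 0, x3 = 0 & x4 = 0] /\
    CD_eqs (D%:~R) x0 x1 x2 x3 x4.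

Definition real_square (R : realType) (D : int) : Prop :=
  exists y : R, D%:~R = y ^+ 2.

(* Z_p = lim Z/p^k Z.  An element of Z_p is represented by a compatible
   sequence a : nat -> int, a k being its residue modulo p^k. *)
Definition zp_compat (p : nat) (a : nat -> int) : Prop :=
  forall k : nat, (a k.+1 = a k %[mod (p ^ k)%:Z])%Z.

Definition zp_unit (p : nat) (a : nat -> int) : Prop :=
  ~~ ((p%:Z) %| a 1%N)%Z.

Definition CD_eqs_mod (m D x0 x1 x2 x3 x4 : int) : Prop :=
  [/\ (x0 ^+ 2 - 2 * x1 ^+ 2 + x2 ^+ 2 = 0 %[mod m])%Z,
      (x1 ^+ 2 - 2 * x2 ^+ 2 + D * x3 ^+ 2 = 0 %[mod m])%Z &
      (x2 ^+ 2 - 2 * D * x3 ^+ 2 + x4 ^+ 2 = 0 %[mod m])%Z].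

(* C_D(Q_p) <> empty : every point of P^4(Q_p) has a representative in Z_p^5
   with some coordinate a unit; the equations hold in Z_p, i.e. modulo p^k
   for every k (ring operations of Z_p are componentwise on residues). *)
Definition CD_padic_point (p : nat) (D : int) : Prop :=
  exists x0 x1 x2 x3 x4 : nat -> int,
    [/\ zp_compat p x0, zp_compat p x1, zp_compat p x2, zp_compat p x3
      & zp_compat p x4] /\
    (zp_unit p x0 \/ zp_unit p x1 \/ zp_unit p x2 \/ zp_unit p x3 \/ zp_unit p x4) /\
    forall k : nat, CD_eqs_mod (p ^ k)%:Z D (x0 k) (x1 k) (x2 k) (x3 k) (x4 k).

(* D is a square in Q_p : D = (y / p^n)^2 for some y in Z_p and n, i.e.
   D * p^(2n) = y^2 in Z_p. *)
Definition padic_square (p : nat) (D : int) : Prop :=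
  exists (y : nat -> int) (n : nat), zp_compat p y /\
    forall k : nat, (D * (p ^ (2 * n))%:Z = y k ^+ 2 %[mod (p ^ k)%:Z])%Z.

(* Main.v *)
Require Import Defs.
From mathcomp Require Import all_boot all_order all_algebra.
From mathcomp Require Import reals.
From mathcomp Require Import zify ring lra.
From Stdlib Require Import ClassicalEpsilon.
Import Order.TTheory GRing.Theory Num.Theory.
Local Open Scope ring_scope.

Lemma modz_ex (m a b : int) : (a = b %[mod m])%Z <-> exists q, a - b = q * m.
Proof.
split=> [h | [q h]].
  by move/eqP: h; rewrite eqz_mod_dvd => /dvdzP.
by apply/eqP; rewrite eqz_mod_dvd; apply/dvdzP; exists q.
Qed.

Lemma PoszX (p k : nat) : (p ^ k)%:Z = (p%:Z) ^+ k.
Proof. by rewrite -!natz natrX. Qed.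

Lemma dvdz_ex (d a : int) : (d %| a)%Z <-> exists q, a = q * d.
Proof. by split => /dvdzP. Qed.

Lemma dvdz_prime_mul (p : nat) (a b : int) : prime p ->
  (p%:Z %| a * b)%Z -> (p%:Z %| a)%Z \/ (p%:Z %| b)%Z.
Proof.
move=> pp; rewrite /dvdz !unfold_in /= abszM Euclid_dvdM //.
by case/orP; [left|right].
Qed.

Lemma dvdz_prime_sqr (p : nat) (a : int) : prime p ->
  (p%:Z %| a ^+ 2)%Z -> (p%:Z %| a)%Z.
Proof. by move=> pp; rewrite expr2 => /(@dvdz_prime_mul p _ _ pp) []. Qed.

Lemma odd_ex (a : int) : ~~ (2%:Z %| a)%Z -> exists q, a = q * 2 + 1.
Proof.
move=> h; exists (a %/ 2)%Z.
have e := divz_eq a 2.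
have h0 : 0 <= (a %% 2)%Z by apply: modz_ge0.
have h1 : (a %% 2)%Z < 2 by apply: ltz_pmod.
have h2 : (a %% 2)%Z != 0 by apply/negP => /eqP /dvdz_mod0P; apply/negP.
have h3 : (a %% 2)%Z = 1 by lia.
by rewrite {1}e h3.
Qed.

Lemma not_dvd_odd (q : int) : ~~ (2%:Z %| q * 2 + 1)%Z.
Proof. by apply/negP => /dvdz_mod0P; rewrite modzMDl. Qed.

Lemma dvdz_addmul (p : int) (y m : int) : (p %| y + m * p)%Z = (p %| y)%Z.
Proof.
apply/dvdz_mod0P/dvdz_mod0P; by rewrite addrC modzMDl.
Qed.

Fixpoint build (P : nat -> int -> Prop) (y0 : {y | P 0%N y})
  (f : forall k, {y | P k y} -> {y | P k.+1 y}) (k : nat) : {y | P k y} :=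
  match k with 0 => y0 | k.+1 => f k (build P y0 f k) end.

Lemma seq_build (p : nat) (P : nat -> int -> Prop) (y0 : int) :
  P 0%N y0 ->
  (forall k y, P k y -> exists y', (y' = y %[mod (p ^ k)%:Z])%Z /\ P k.+1 y') ->
  exists a, zp_compat p a /\ forall k, P k (a k).
Proof.
move=> P0 step.
pose g k (s : {y | P k y}) :=
  constructive_indefinite_description _ (step k (proj1_sig s) (proj2_sig s)).
pose f k (s : {y | P k y}) : {y | P k.+1 y} :=
  exist _ (proj1_sig (g k s)) (proj2 (proj2_sig (g k s))).
exists (fun k => proj1_sig (build P (exist _ y0 P0) f k)); split.
  move=> k /=; exact: (proj1 (proj2_sig (g k _))).
by move=> k; exact: proj2_sig.
Qed.

Lemma hensel_odd (p : nat) (c e y0 : int) : prime p -> p != 2%N ->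
  ~~ (p%:Z %| c)%Z -> ~~ (p%:Z %| y0)%Z -> (c * y0 ^+ 2 = e %[mod p%:Z])%Z ->
  exists a, zp_compat p a /\ forall k, (c * a k ^+ 2 = e %[mod (p ^ k.+1)%:Z])%Z.
Proof.
move=> pp p2 pc py0 h0.
pose P k y := (c * y ^+ 2 = e %[mod (p ^ k.+1)%:Z])%Z /\ ~~ (p%:Z %| y)%Z.
have [a [ac aP]] : exists a, zp_compat p a /\ forall k, P k (a k).
  apply: (@seq_build _ _ y0); first by split; rewrite // expn1.
  move=> k y [/modz_ex [w hw] py].
  have cop : coprimez (2 * c * y) p.
    rewrite coprimez_sym coprimezE /= prime_coprime //.
    rewrite !abszM !Euclid_dvdM // dvdn_prime2 // (negbTE p2) /=.
    by rewrite negb_or; apply/andP; split.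
  case/coprimezP: cop => [[u v] /= huv].
  pose t := - (u * w).
  exists (y + t * (p%:Z ^+ k.+1)); split.
    apply/modz_ex; exists (t * p%:Z); rewrite PoszX exprS; ring.
  split; last by rewrite exprSr mulrA dvdz_addmul.
  apply/modz_ex; exists (w * v + c * t ^+ 2 * p%:Z ^+ k).
  rewrite !PoszX in hw *.
  have he : e = c * y ^+ 2 - w * p%:Z ^+ k.+1 by rewrite -hw; ring.
  rewrite he; apply/eqP; rewrite -subr_eq0; apply/eqP.
  rewrite !(exprS (p%:Z)).
  apply: (@eq_trans _ _ (w * (p%:Z * p%:Z ^+ k) * (1 - (u * (2 * c * y) + v * p%:Z)))).
    by rewrite /t; ring.
  by rewrite huv subrr mulr0.
by exists a; split=> // k; case: (aP k).
Qed.

Lemma hensel_two (c e y0 : int) :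
  ~~ (2%:Z %| c)%Z -> ~~ (2%:Z %| y0)%Z -> (c * y0 ^+ 2 = e %[mod 8])%Z ->
  exists a, zp_compat 2 a /\ forall k, (c * a k ^+ 2 = e %[mod (2 ^ k.+3)%:Z])%Z.
Proof.
move=> pc py0 h0.
pose P k y := (c * y ^+ 2 = e %[mod (2 ^ k.+3)%:Z])%Z /\ ~~ (2%:Z %| y)%Z.
have [a [ac aP]] : exists a, zp_compat 2 a /\ forall k, P k (a k).
  apply: (@seq_build _ _ y0); first by split.
  move=> k y [/modz_ex [w hw] py].
  rewrite PoszX in hw.
  have he : e = c * y ^+ 2 - w * 2%:Z ^+ k.+3 by rewrite -hw; ring.
  have [c1 hc] := @odd_ex c pc.
  have [y1 hy] := @odd_ex y py.
  case: (boolP (2%:Z %| w)%Z) => [/dvdz_ex [w1 hw1] | /odd_ex [w2 hw2]].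
    exists y; split => //; split => //.
    apply/modz_ex; exists w1; rewrite PoszX he hw1 !exprS; ring.
  exists (y + 2%:Z ^+ k.+2); split.
    apply/modz_ex; exists 4; rewrite PoszX !exprS; ring.
  split.
    apply/modz_ex; exists (w2 + 2 * c1 * y1 + c1 + y1 + 1 + c * 2%:Z ^+ k).
    rewrite PoszX he hw2 hc hy !exprS; ring.
  have -> : y + 2%:Z ^+ k.+2 = (y1 + 2%:Z ^+ k.+1) * 2 + 1.
    by rewrite hy !exprS; ring.
  exact: not_dvd_odd.
by exists a; split=> // k; case: (aP k).
Qed.

Lemma modz_sub (m n a b : int) : (m %| n)%Z -> (a = b %[mod n])%Z -> (a = b %[mod m])%Z.
Proof.
move=> /dvdz_ex [c ->] /modz_ex [q hq]; apply/modz_ex; exists (q * c).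
by rewrite hq mulrA.
Qed.

Lemma dvdz_pow (p i j : nat) : (i <= j)%N -> ((p ^ i)%:Z %| (p ^ j)%:Z)%Z.
Proof. by move=> h; rewrite /dvdz unfold_in /= dvdn_exp2l. Qed.

Lemma sq_reduce (p : nat) (D : int) : prime p -> forall n,
  (forall k, exists Z, (D * (p ^ (2 * n))%:Z = Z ^+ 2 %[mod (p ^ k)%:Z])%Z) ->
  forall k, exists Z, (D = Z ^+ 2 %[mod (p ^ k)%:Z])%Z.
Proof.
move=> pp; elim=> [|n IH] h.
  by move=> k; have [Z hZ] := h k; exists Z; rewrite muln0 expn0 mulr1 in hZ.
apply: IH => k.
have [Z /modz_ex [q hq]] := h k.+2.
rewrite !PoszX mulnS !(exprS (p%:Z)) in hq.
have pZ : (p%:Z %| Z)%Z.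
  apply: (@dvdz_prime_sqr p Z pp); apply/dvdz_ex.
  exists (D * (p%:Z * p%:Z ^+ (2 * n)) - q * (p%:Z * p%:Z ^+ k)).
  have hZ2 : Z ^+ 2 = D * (p%:Z * (p%:Z * p%:Z ^+ (2 * n))) - q * (p%:Z * (p%:Z * p%:Z ^+ k)).
    by rewrite -hq; ring.
  rewrite hZ2; ring.
have [Z' hZ'] := (iffLR (dvdz_ex _ _)) pZ.
exists Z'; apply/modz_ex; exists q; rewrite !PoszX.
have p0 : p%:Z * p%:Z != 0.
  by rewrite mulf_neq0 // eqz_nat -lt0n prime_gt0.
apply: (mulfI p0).
have E1 : p%:Z * p%:Z * (D * p%:Z ^+ (2 * n) - Z' ^+ 2) =
   D * (p%:Z * (p%:Z * p%:Z ^+ (2 * n))) - (Z' * p%:Z) ^+ 2 by ring.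
rewrite E1 -hZ' hq; ring.
Qed.

Lemma mod_all (M : nat) (P : int -> bool) (x : int) : (0 < M)%N ->
  all (fun r : nat => P r%:Z) (iota 0 M) -> P (x %% M%:Z)%Z.
Proof.
move=> M0 /allP hall.
have h0 : 0 <= (x %% M%:Z)%Z by apply: modz_ge0; rewrite eqz_nat -lt0n.
have h1 : (x %% M%:Z)%Z < M%:Z by apply: ltz_pmod; rewrite ltz_nat.
case E: (x %% M%:Z)%Z h0 h1 => [n|n] // _ h1.
by apply: hall; rewrite mem_iota; move: h1; rewrite ltz_nat add0n.
Qed.

Lemma sq_mod (M x : int) : (x ^+ 2 %% M)%Z = ((x %% M)%Z ^+ 2 %% M)%Z.
Proof. by rewrite modzXm. Qed.

Lemma sq_cong_gen (M : nat) (P : int -> bool) (D Z : int) : (0 < M)%N ->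
  (D = Z ^+ 2 %[mod M%:Z])%Z ->
  all (fun r : nat => P ((r%:Z) ^+ 2 %% M%:Z)%Z) (iota 0 M) -> P (D %% M%:Z)%Z.
Proof.
move=> M0 -> hall; rewrite sq_mod.
exact: (@mod_all M (fun r => P (r ^+ 2 %% M%:Z)%Z)).
Qed.

Lemma modz_mod_dvd (d m x : int) : (d %| m)%Z -> ((x %% m)%Z %% d)%Z = (x %% d)%Z.
Proof.
move=> /dvdz_ex [c hc].
by rewrite {2}(divz_eq x m) hc mulrA modzMDl.
Qed.

Lemma sqf_ndvd (D : int) (p : nat) : squarefree D -> prime p ->
  ~~ ((p ^ 2)%:Z %| D)%Z.
Proof. by case=> _ h pp; exact: (h p pp). Qed.

Lemma ndvd_mod (d D : int) : ~~ (d %| D)%Z -> (D %% d)%Z != 0.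
Proof. by apply: contra => /eqP /dvdz_mod0P. Qed.

Lemma sq2 D : squarefree D -> padic_square 2 D -> (D = 1 %[mod 8])%Z.
Proof.
move=> sqf [y [n [_ hy]]].
have [Z hZ] := @sq_reduce 2 D isT n (fun k => ex_intro _ (y k) (hy k)) 3.
have := @sq_cong_gen 8 (fun s => ((s %% 4)%Z != 0) ==> (s == 1)) D Z isT hZ isT.
have h4 : ((D %% 8)%Z %% 4)%Z != 0.
  rewrite modz_mod_dvd //; apply: ndvd_mod; exact: (@sqf_ndvd D 2 sqf isT).
by move=> /implyP /(_ h4) /eqP ->.
Qed.

Lemma sq3 D : squarefree D -> padic_square 3 D -> (D = 1 %[mod 3])%Z.
Proof.
move=> sqf [y [n [_ hy]]].
have [Z hZ] := @sq_reduce 3 D isT n (fun k => ex_intro _ (y k) (hy k)) 2.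
have := @sq_cong_gen 9 (fun s => (s != 0) ==> ((s %% 3)%Z == 1)) D Z isT hZ isT.
have h9 : (D %% 9)%Z != 0.
  apply: ndvd_mod; exact: (@sqf_ndvd D 3 sqf isT).
move=> /implyP /(_ h9) /eqP; rewrite modz_mod_dvd // => ->; by [].
Qed.

Lemma sq5 D : squarefree D -> padic_square 5 D ->
  (D = 1 %[mod 5])%Z \/ (D = -1 %[mod 5])%Z.
Proof.
move=> sqf [y [n [_ hy]]].
have [Z hZ] := @sq_reduce 5 D isT n (fun k => ex_intro _ (y k) (hy k)) 2.
have := @sq_cong_gen 25 (fun s => (s != 0) ==> (((s %% 5)%Z == 1) || ((s %% 5)%Z == 4))) D Z isT hZ isT.
have h25 : (D %% 25)%Z != 0.
  apply: ndvd_mod; exact: (@sqf_ndvd D 5 sqf isT).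
move=> /implyP /(_ h25); rewrite modz_mod_dvd //.
by case/orP => /eqP ->; [left | right].
Qed.

Lemma mod_ndvd (d D : int) : (D %% d)%Z != 0 -> ~~ (d %| D)%Z.
Proof. by apply: contra => /dvdz_mod0P ->. Qed.

Lemma hensel_to_square p D (a : nat -> int) (f : nat -> nat) :
  zp_compat p a -> (forall k, (1 * a k ^+ 2 = D %[mod (p ^ (f k))%:Z])%Z) ->
  (forall k, (k <= f k)%N) -> padic_square p D.
Proof.
move=> ac h hf; exists a, 0%N; split => // k.
rewrite muln0 expn0 mulr1.
have := @modz_sub _ _ _ _ (@dvdz_pow p _ _ (hf k)) (h k).
by rewrite mul1r => ->.
Qed.

Lemma hensel_to_point p D (z : nat -> int) (f : nat -> nat) :
  zp_compat p z -> (forall k, (D * z k ^+ 2 = 1 %[mod (p ^ (f k))%:Z])%Z) ->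
  (forall k, (k <= f k)%N) -> ~~ (p%:Z %| 1)%Z -> CD_padic_point p D.
Proof.
move=> zc h hf p1.
exists (fun _ => 1), (fun _ => 1), (fun _ => 1), z, (fun _ => 1).
split; first by split.
split; first by left.
move=> k /=.
have /modz_ex [q hq] := @modz_sub _ _ _ _ (@dvdz_pow p _ _ (hf k)) (h k).
split; apply/modz_ex.
- by exists 0; ring.
- by exists q; rewrite -hq; ring.
- exists (-2 * q).
  have -> : -2 * q * (p ^ k)%:Z = -2 * (q * (p ^ k)%:Z) by ring.
  by rewrite -hq; ring.
Qed.

Lemma prime_ndvd1 p : prime p -> ~~ (p%:Z %| 1)%Z.
Proof.
move=> pp; rewrite /dvdz unfold_in /= dvdn1.
by apply/eqP => e; move: pp; rewrite e.
Qed.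

Lemma odd_cong_square p D y0 : prime p -> p != 2%N -> ~~ (p%:Z %| y0)%Z ->
  (1 * y0 ^+ 2 = D %[mod p%:Z])%Z -> padic_square p D.
Proof.
move=> pp p2 py h.
have [a [ac ha]] := @hensel_odd p 1 D y0 pp p2 (@prime_ndvd1 p pp) py h.
by apply: (@hensel_to_square p D a (fun k => k.+1) ac ha) => k; apply: leqnSn.
Qed.

Lemma odd_cong_point p D y0 : prime p -> p != 2%N -> ~~ (p%:Z %| D)%Z ->
  ~~ (p%:Z %| y0)%Z -> (D * y0 ^+ 2 = 1 %[mod p%:Z])%Z -> CD_padic_point p D.
Proof.
move=> pp p2 pD py h.
have [a [ac ha]] := @hensel_odd p D 1 y0 pp p2 pD py h.
apply: (@hensel_to_point p D a (fun k => k.+1) ac ha) => [k|]; [exact: leqnSn | exact: prime_ndvd1].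
Qed.

Lemma cong2_square D : (D = 1 %[mod 8])%Z -> padic_square 2 D.
Proof.
move=> hD.
have h0 : (1 * 1 ^+ 2 = D %[mod 8])%Z by rewrite hD.
have [a [ac ha]] := @hensel_two 1 D 1 isT isT h0.
by apply: (@hensel_to_square 2 D a (fun k => k.+3) ac ha) => k; rewrite -addn3 leq_addr.
Qed.

Lemma cong2_point D : (D = 1 %[mod 8])%Z -> CD_padic_point 2 D.
Proof.
move=> hD.
have pD : ~~ (2%:Z %| D)%Z.
  apply: mod_ndvd; rewrite -(@modz_mod_dvd 2 8) // hD; by [].
have h0 : (D * 1 ^+ 2 = 1 %[mod 8])%Z by rewrite expr1n mulr1 hD.
have [a [ac ha]] := @hensel_two D 1 1 pD isT h0.
apply: (@hensel_to_point 2 D a (fun k => k.+3) ac ha) => [k|//]; by rewrite -addn3 leq_addr.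
Qed.

Lemma cong3 D : (D = 1 %[mod 3])%Z -> padic_square 3 D /\ CD_padic_point 3 D.
Proof.
move=> hD; split.
  by apply: (@odd_cong_square _ _ 1) => //; rewrite hD.
apply: (@odd_cong_point _ _ 1) => //; last by rewrite expr1n mulr1 hD.
by apply: mod_ndvd; rewrite hD.
Qed.

Lemma cong5 D : (D = 1 %[mod 5])%Z \/ (D = -1 %[mod 5])%Z ->
  padic_square 5 D /\ CD_padic_point 5 D.
Proof.
case=> hD; split.
- by apply: (@odd_cong_square _ _ 1) => //; rewrite hD.
- apply: (@odd_cong_point _ _ 1) => //; last by rewrite expr1n mulr1 hD.
  by apply: mod_ndvd; rewrite hD.
- by apply: (@odd_cong_square _ _ 2) => //; rewrite hD.
- apply: (@odd_cong_point _ _ 2) => //; last by rewrite -modzMml hD.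
  by apply: mod_ndvd; rewrite hD.
Qed.

Definition eq_s (M d s0 s1 s2 s3 s4 : int) : bool :=
  [&& ((s0 - 2 * s1 + s2) %% M)%Z == 0,
      ((s1 - 2 * s2 + d * s3) %% M)%Z == 0 &
      ((s2 - 2 * d * s3 + s4) %% M)%Z == 0].

Definition chk (M p : int) (Ds S : seq int) : bool :=
  all (fun d => all (fun s0 => all (fun s1 => all (fun s2 => all (fun s3 =>
    all (fun s4 => eq_s M d s0 s1 s2 s3 s4 ==>
      [&& (p %| s0)%Z, (p %| s1)%Z, (p %| s2)%Z & (p %| s4)%Z]) S) S) S) S) S) Ds.

Lemma chkP M p Ds S d s0 s1 s2 s3 s4 : chk M p Ds S -> d \in Ds ->
  s0 \in S -> s1 \in S -> s2 \in S -> s3 \in S -> s4 \in S ->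
  eq_s M d s0 s1 s2 s3 s4 ->
  [&& (p %| s0)%Z, (p %| s1)%Z, (p %| s2)%Z & (p %| s4)%Z].
Proof.
move=> /allP /(_ d) H hd h0 h1 h2 h3 h4.
move: (H hd) => /allP /(_ s0 h0) /allP /(_ s1 h1) /allP /(_ s2 h2)
  /allP /(_ s3 h3) /allP /(_ s4 h4) /implyP; exact.
Qed.

Lemma bridge (M D x0 x1 x2 x3 x4 : int) : CD_eqs_mod M D x0 x1 x2 x3 x4 ->
  eq_s M (D %% M)%Z (x0 ^+ 2 %% M)%Z (x1 ^+ 2 %% M)%Z (x2 ^+ 2 %% M)%Z
       (x3 ^+ 2 %% M)%Z (x4 ^+ 2 %% M)%Z.
Proof.
case=> e1 e2 e3.
have d0 := divz_eq (x0 ^+ 2) M; have d1 := divz_eq (x1 ^+ 2) M.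
have d2 := divz_eq (x2 ^+ 2) M; have d3 := divz_eq (x3 ^+ 2) M.
have d4 := divz_eq (x4 ^+ 2) M; have dD := divz_eq D M.
move: (x0 ^+ 2 %/ M)%Z (x1 ^+ 2 %/ M)%Z (x2 ^+ 2 %/ M)%Z (x3 ^+ 2 %/ M)%Z
  (x4 ^+ 2 %/ M)%Z (D %/ M)%Z d0 d1 d2 d3 d4 dD => q0 q1 q2 q3 q4 qD d0 d1 d2 d3 d4 dD.
move: (x0 ^+ 2 %% M)%Z (x1 ^+ 2 %% M)%Z (x2 ^+ 2 %% M)%Z (x3 ^+ 2 %% M)%Z
  (x4 ^+ 2 %% M)%Z (D %% M)%Z d0 d1 d2 d3 d4 dD => s0 s1 s2 s3 s4 dd d0 d1 d2 d3 d4 dD.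
rewrite d0 d1 d2 d3 d4 dD mod0z in e1 e2 e3.
apply/and3P; split; apply/eqP.
- rewrite -e1 -(modzMDl (q0 - 2 * q1 + q2) _ M); congr (_ %% _)%Z; ring.
- rewrite -e2 -(modzMDl (q1 - 2 * q2 + qD * q3 * M + qD * s3 + dd * q3) _ M).
  congr (_ %% _)%Z; ring.
- rewrite -e3 -(modzMDl (q2 - 2 * (qD * q3 * M + qD * s3 + dd * q3) + q4) _ M).
  congr (_ %% _)%Z; ring.
Qed.

Lemma dvd_sq_mod (p M x : int) : (p %| M)%Z -> (p %| (x ^+ 2 %% M)%Z)%Z ->
  (p %| x ^+ 2)%Z.
Proof.
move=> /dvdz_ex [a ha] /dvdz_ex [b hb]; apply/dvdz_ex.
exists ((x ^+ 2 %/ M)%Z * a + b).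
by rewrite {1}(divz_eq (x ^+ 2) M) hb ha; ring.
Qed.

Lemma hand (p : nat) (D x1 x2 x3 : int) : prime p -> squarefree D ->
  (x1 ^+ 2 - 2 * x2 ^+ 2 + D * x3 ^+ 2 = 0 %[mod (p ^ 2)%:Z])%Z ->
  (p%:Z %| x1)%Z -> (p%:Z %| x2)%Z -> (p%:Z %| x3)%Z.
Proof.
move=> pp sqf /modz_ex [q hq] /dvdz_ex [a ha] /dvdz_ex [b hb]; subst x1 x2.
apply/negPn/negP => np3.
have cop : coprimez ((p ^ 2)%:Z) (x3 ^+ 2).
  rewrite PoszX; apply: coprimezXl; apply: coprimezXr.
  by rewrite coprimezE /= prime_coprime.
have : ((p ^ 2)%:Z %| x3 ^+ 2 * D)%Z.
  apply/dvdz_ex; exists (q - a ^+ 2 + 2 * b ^+ 2).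
  rewrite PoszX; move: hq; rewrite subr0 PoszX => hq.
  have -> : x3 ^+ 2 * D = (a * p%:Z) ^+ 2 - 2 * (b * p%:Z) ^+ 2 + D * x3 ^+ 2
     - (a * p%:Z) ^+ 2 + 2 * (b * p%:Z) ^+ 2 by ring.
  rewrite hq; ring.
rewrite Gauss_dvdzr //; apply/negP; exact: sqf_ndvd.
Qed.

Lemma compat_unit (p : nat) (a : nat -> int) : zp_compat p a ->
  forall k, (p%:Z %| a k.+1 - a 1%N)%Z.
Proof.
move=> ac; elim=> [|k IH]; first by rewrite subrr dvdz0.
have := ac k.+1 => /modz_ex [q hq].
move/dvdz_ex: IH => [r hr]; apply/dvdz_ex.
exists (q * (p ^ k)%:Z + r).
have -> : a k.+2 - a 1%N = (a k.+2 - a k.+1) + (a k.+1 - a 1%N) by ring.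
by rewrite hq hr !PoszX exprS; ring.
Qed.

Lemma unit_at (p : nat) (a : nat -> int) k : zp_compat p a -> zp_unit p a ->
  ~~ (p%:Z %| a k.+1)%Z.
Proof.
move=> ac; apply: contra => h.
have /dvdz_ex [r hr] := @compat_unit p a ac k.
move/dvdz_ex: h => [s hs]; apply/dvdz_ex; exists (s - r).
have -> : a 1%N = a k.+1 - (a k.+1 - a 1%N) by ring.
by rewrite hr hs; ring.
Qed.

Lemma point_cong (p K M : nat) (Ds S : seq int) (D : int) : prime p ->
  squarefree D -> (2 <= K)%N -> (M %| p ^ K)%N -> (p %| M)%N -> (0 < M)%N ->
  (D %% M%:Z)%Z \in Ds -> chk M%:Z p%:Z Ds S ->
  all (fun r : nat => ((r%:Z) ^+ 2 %% M%:Z)%Z \in S) (iota 0 M) ->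
  CD_padic_point p D -> False.
Proof.
move=> pp sqf K2 MK pM M0 hD hchk hS
  [x0 [x1 [x2 [x3 [x4 [[c0 c1 c2 c3 c4] [hu heq]]]]]]].
have [e1 e2 e3] := heq K.
have hK : K = K.-1.+1 by rewrite prednK // ltnW.
have MK' : (M%:Z %| (p ^ K)%:Z)%Z by rewrite /dvdz unfold_in.
have eM : CD_eqs_mod M%:Z D (x0 K) (x1 K) (x2 K) (x3 K) (x4 K).
  by split; apply: (@modz_sub _ _ _ _ MK').
have eb := @bridge _ _ _ _ _ _ _ eM.
have sin : forall x, (x ^+ 2 %% M%:Z)%Z \in S.
  move=> x; rewrite sq_mod.
  exact: (@mod_all M (fun r => (r ^+ 2 %% M%:Z)%Z \in S)).
have := @chkP _ _ _ _ _ _ _ _ _ _ hchk hD (sin _) (sin _) (sin _) (sin _) (sin _) eb.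
case/and4P => d0 d1 d2 d4.
have pM' : (p%:Z %| M%:Z)%Z by rewrite /dvdz unfold_in.
have px0 := @dvdz_prime_sqr p _ pp (@dvd_sq_mod _ _ _ pM' d0).
have px1 := @dvdz_prime_sqr p _ pp (@dvd_sq_mod _ _ _ pM' d1).
have px2 := @dvdz_prime_sqr p _ pp (@dvd_sq_mod _ _ _ pM' d2).
have px4 := @dvdz_prime_sqr p _ pp (@dvd_sq_mod _ _ _ pM' d4).
have e2' := @modz_sub _ _ _ _ (@dvdz_pow p 2 K K2) e2.
have px3 := @hand p D _ _ _ pp sqf e2' px1 px2.
move: px0 px1 px2 px3 px4; rewrite hK => px0 px1 px2 px3 px4.
case: hu => [u|[u|[u|[u|u]]]].
- by move: (@unit_at p _ K.-1 c0 u); rewrite px0.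
- by move: (@unit_at p _ K.-1 c1 u); rewrite px1.
- by move: (@unit_at p _ K.-1 c2 u); rewrite px2.
- by move: (@unit_at p _ K.-1 c3 u); rewrite px3.
- by move: (@unit_at p _ K.-1 c4 u); rewrite px4.
Qed.

Lemma chk2 : chk 8 2 [:: 2; 3; 5; 6; 7] [:: 0; 1; 4].
Proof. by vm_compute. Qed.
Lemma chk3 : chk 3 3 [:: 0; 2] [:: 0; 1].
Proof. by vm_compute. Qed.
Lemma chk5 : chk 5 5 [:: 0; 2; 3] [:: 0; 1; 4].
Proof. by vm_compute. Qed.

Lemma real_part (R : realType) (D : int) : squarefree D ->
  (CD_real_point R D <-> real_square R D) /\ (real_square R D <-> 0 < D).
Proof.
case=> D0 _.
have DR0 : (D%:~R : R) != 0 by rewrite intr_eq0.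
have sq_pos : real_square R D <-> 0 < D.
  split.
    move=> [y hy].
    have : (0 : R) <= D%:~R by rewrite hy sqr_ge0.
    by rewrite ler0z lt_neqAle eq_sym D0.
  move=> hD; exists (Num.sqrt (D%:~R : R)).
  by rewrite sqr_sqrtr // ler0z ltW.
split=> //; split.
  move=> [x0 [x1 [x2 [x3 [x4 [nz [e1 e2 e3]]]]]]].
  apply/sq_pos; rewrite lt_neqAle eq_sym D0 /=.
  rewrite leNgt; apply/negP => Dlt.
  have dlt : (D%:~R : R) < 0 by rewrite ltrz0.
  set d := (D%:~R : R) in dlt e2 e3 DR0.
  have h3 : 0 <= - (2 * d * x3 ^+ 2) by nra.
  have s2 := sqr_ge0 x2; have s4 := sqr_ge0 x4.
  have z2 : x2 ^+ 2 = 0 by apply/eqP; rewrite eq_le; apply/andP; split; lra.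
  have z33 : d * x3 ^+ 2 = 0 by apply/eqP; rewrite eq_le; apply/andP; split; nra.
  have x20 : x2 = 0 by apply/eqP; rewrite -sqrf_eq0; apply/eqP.
  have x30 : x3 = 0.
    by move/eqP: z33; rewrite mulf_eq0 (negbTE DR0) sqrf_eq0 => /eqP.
  have z4 : x4 ^+ 2 = 0 by apply/eqP; rewrite eq_le; apply/andP; split; lra.
  have x40 : x4 = 0 by apply/eqP; rewrite -sqrf_eq0; apply/eqP.
  have x10 : x1 = 0.
    apply/eqP; rewrite -sqrf_eq0; apply/eqP.
    by move: e2; rewrite x20 x30; rewrite expr0n /=; lra.
  have x00 : x0 = 0.
    apply/eqP; rewrite -sqrf_eq0; apply/eqP.
    by move: e1; rewrite x20 x10 expr0n /=; lra.
  by apply: nz; split.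
move=> [y hy].
have y0 : y != 0 by apply: contraNneq DR0; rewrite hy => ->; rewrite expr0n.
exists 1, 1, 1, y^-1, 1; split.
  by case=> /eqP; rewrite oner_eq0.
rewrite /CD_eqs hy; split; field => //.
Qed.

Theorem lemma4p2 (D : int) : squarefree D ->
  (forall R : realType,
     (CD_real_point R D <-> real_square R D) /\ (real_square R D <-> 0 < D))
  /\ ((CD_padic_point 2 D <-> padic_square 2 D) /\
      (padic_square 2 D <-> (D = 1 %[mod 8])%Z))
  /\ ((CD_padic_point 3 D <-> padic_square 3 D) /\
      (padic_square 3 D <-> (D = 1 %[mod 3])%Z))
  /\ ((CD_padic_point 5 D <-> padic_square 5 D) /\
      (padic_square 5 D <-> ((D = 1 %[mod 5])%Z \/ (D = -1 %[mod 5])%Z))).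
Proof.
move=> sqf.
split; first by move=> R; exact: real_part.
split.
  have c2 : CD_padic_point 2 D -> (D = 1 %[mod 8])%Z.
    move=> h; case: (boolP ((D %% 8)%Z == 1)) => [/eqP -> // | n1].
    exfalso.
    have n4 : ((D %% 8)%Z %% 4)%Z != 0.
      rewrite modz_mod_dvd //; apply: ndvd_mod; exact: (@sqf_ndvd D 2 sqf isT).
    have hD : (D %% 8)%Z \in [:: 2; 3; 5; 6; 7].
      have := @mod_all 8 (fun r => (r != 1) ==> ((r %% 4)%Z != 0) ==>
        (r \in [:: 2; 3; 5; 6; 7])) D isT isT.
      by rewrite n1 n4.
    exact: (@point_cong 2 3 8 _ _ D isT sqf isT isT isT isT hD chk2 isT h).
  split; split.
  - by move=> h; apply: cong2_square; apply: c2.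
  - by move=> h; apply: cong2_point; apply: sq2.
  - exact: sq2.
  - exact: cong2_square.
split.
  have c3 : CD_padic_point 3 D -> (D = 1 %[mod 3])%Z.
    move=> h; case: (boolP ((D %% 3)%Z == 1)) => [/eqP -> // | n1].
    exfalso.
    have hD : (D %% 3)%Z \in [:: 0; 2].
      have := @mod_all 3 (fun r => (r != 1) ==> (r \in [:: 0; 2])) D isT isT.
      by rewrite n1.
    exact: (@point_cong 3 2 3 _ _ D isT sqf isT isT isT isT hD chk3 isT h).
  split; split.
  - by move=> h; exact: (proj1 (@cong3 D (c3 h))).
  - by move=> h; exact: (proj2 (@cong3 D (@sq3 D sqf h))).
  - exact: sq3.
  - by move=> h; exact: (proj1 (@cong3 D h)).
have c5 : CD_padic_point 5 D -> (D = 1 %[mod 5])%Z \/ (D = -1 %[mod 5])%Z.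
  move=> h; case: (boolP ((D %% 5)%Z == 1)) => [/eqP -> | n1]; first by left.
  case: (boolP ((D %% 5)%Z == 4)) => [/eqP -> | n4]; first by right.
  exfalso.
  have hD : (D %% 5)%Z \in [:: 0; 2; 3].
    have := @mod_all 5 (fun r => (r != 1) ==> (r != 4) ==> (r \in [:: 0; 2; 3])) D isT isT.
    by rewrite n1 n4.
  exact: (@point_cong 5 2 5 _ _ D isT sqf isT isT isT isT hD chk5 isT h).
split; split.
- by move=> h; exact: (proj1 (@cong5 D (c5 h))).
- by move=> h; exact: (proj2 (@cong5 D (@sq5 D sqf h))).
- exact: sq5.
- by move=> h; exact: (proj1 (@cong5 D h)).
Qed.
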